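(* For each positive integer $k$ there is $c_k>0$ such that the following holds. Suppose $P$ is a complete polynomial of degree $k$ with integer coefficients in its binomial representation. If $x$ is sufficiently large and $1<w<(\log x)/2$ is an integer, then the set $X$ of integers $y\in[x,(1+1/k)x)$ such that $P(y)$ has no prime divisor at most $w$ satisfies $|X|\ge c_k(\log w)^{-k}x$.
   Context: Every real polynomial of degree $k$ can be written as $P(x)=\sum_{i=0}^k\alpha_i\binom{x}{i}$; $P$ has integer coefficients in its binomial representation if all $\alpha_i$ are integers. $P$ is complete if every sufficiently large positive integer is a sum of distinct terms of $(P(m))_{m\ge1}$. $\log$ is the natural logarithm. *)

(* Defs.v *)
From Stdlib Require Import Reals ZArith List Znumtheory.
Open Scope R_scope.

(* Binomial coefficient C(n, i) on naturals (Pascal recursion);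
   C(n,i) = 0 for i > n, as for the polynomial binom(x,i) at x = n. *)
Fixpoint binom (n i : nat) : nat :=
  match n, i with
  | _, O => 1%nat
  | O, S _ => 0%nat
  | S n', S i' => (binom n' i' + binom n' i)%nat
  end.

Fixpoint Pbin_aux (alpha : nat -> Z) (j : nat) (y : nat) : Z :=
  match j with
  | O => (alpha 0%nat * Z.of_nat (binom y 0))%Z
  | S j' => (Pbin_aux alpha j' y + alpha j * Z.of_nat (binom y j))%Z
  end.

Definition Pbin (k : nat) (alpha : nat -> Z) (y : nat) : Z := Pbin_aux alpha k y.

Definition sum_vals (P : nat -> Z) (S : list nat) : Z :=
  fold_right (fun m acc => (P m + acc)%Z) 0%Z S.

Definition complete (P : nat -> Z) : Prop :=
  exists N : nat, forall n : nat, (N <= n)%nat -> (1 <= n)%nat ->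
    exists S : list nat, NoDup S /\ Forall (fun m => (1 <= m)%nat) S /\
      sum_vals P S = Z.of_nat n.

Definition no_small_prime_divisor (w : nat) (v : Z) : Prop :=
  forall p : Z, prime p -> (p <= Z.of_nat w)%Z -> ~ (p | v)%Z.

(* Main.v *)
Require Import Defs.
From Stdlib Require Import Reals ZArith List Znumtheory Lra Lia Psatz.
From mathcomp Require Import all_boot zify.
Set Warnings "-notation-overridden".
Delimit Scope R_scope with R.
Open Scope nat_scope.

Lemma binomE n i : binom n i = 'C(n, i).
Proof.
elim: n i => [|n IH] [|i] //=.
by rewrite binS IH IH addnC.
Qed.

Fixpoint prodn (f : nat -> nat) (n : nat) : nat :=
  match n with O => 1 | S n' => prodn f n' * f n' end.

Lemma prodnM f g n : prodn (fun m => f m * g m) n = prodn f n * prodn g n.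
Proof. elim: n => //= n ->. by rewrite !mulnA; congr (_ * _); rewrite mulnAC. Qed.

Lemma prodn_ext f g n : (forall m, m < n -> f m = g m) -> prodn f n = prodn g n.
Proof. elim: n => //= n IH H. rewrite IH ?H // => m Hm; apply: H; lia. Qed.

Lemma prodn_gt0 f n : (forall m, 0 < f m) -> 0 < prodn f n.
Proof. move=> H; elim: n => //= n IH. by rewrite muln_gt0 IH H. Qed.

Lemma prime_not_dvd_fact p n : prime p -> n < p -> ~~ (p %| n`!).
Proof.
move=> pp; elim: n => [|n IH] H.
  by rewrite fact0 Euclid_dvd1.
rewrite factS Euclid_dvdM // negb_or IH; last lia.
rewrite andbT; apply/negP => /dvdn_leq; lia.
Qed.

Lemma dvd_val_lemma p E D n : prime p -> 0 < n -> p ^ E %| D * n -> ~~ (p ^ E %| n) -> p %| D.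
Proof.
move=> pp n0 H1 H2.
case: (posnP D) => [->|D0]; first by rewrite dvdn0.
move: H1 H2; rewrite !pfactor_dvdn ?muln_gt0 ?D0 // lognM // => H1 H2.
have : 0 < logn p D by lia.
rewrite logn_gt0 mem_primes => /and3P[_ _ //].
Qed.

Lemma ffact_period q y i : (y + q) ^_ i = y ^_ i %[mod q].
Proof.
elim: i y => [|i IH] y //.
case: y => [|y].
  rewrite ffact0n /= add0n ffactnS.
  by rewrite -modnMml modnn mul0n mod0n.
rewrite addSn !ffactSS -modnMm -[in RHS]modnMm.
have -> : (y + q).+1 = y.+1 + q by lia.
by rewrite modnDr IH.
Qed.

Lemma mod_cancel_fact p E a b n : prime p -> 0 < n -> ~~ (p ^ E %| n) ->
  a * n = b * n %[mod p ^ E] -> a = b %[mod p].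
Proof.
move=> pp n0 Hn H.
case: (leqP b a) => hab.
  apply/eqP; rewrite eqn_mod_dvd //.
  apply: (@dvd_val_lemma p E _ n pp n0 _ Hn).
  by rewrite mulnBl -eqn_mod_dvd ?leq_mul2r ?hab ?orbT //; apply/eqP.
apply/esym/eqP; rewrite eqn_mod_dvd; last exact: ltnW.
apply: (@dvd_val_lemma p E _ n pp n0 _ Hn).
by rewrite mulnBl -eqn_mod_dvd ?leq_mul2r ?(ltnW hab) ?orbT //; apply/eqP.
Qed.

Lemma binom_period p E y i : prime p -> ~~ (p ^ E %| i`!) ->
  'C(y + p ^ E, i) = 'C(y, i) %[mod p].
Proof.
move=> pp H; apply: (@mod_cancel_fact p E _ _ (i`!) pp (fact_gt0 i) H).
by rewrite !bin_ffact ffact_period.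
Qed.

Definition Pc (c : nat -> bool) (N : nat) :=
  prodn (fun m => if prime m && c m then m else 1) N.

Lemma Pc_gt0 c N : 0 < Pc c N.
Proof. apply: prodn_gt0 => m; case: ifP => // /andP[/prime_gt0 //]. Qed.

Lemma Pc_coprime c N n : prime n -> N <= n -> coprime (Pc c N) n.
Proof.
move=> pn; elim: N => [|N IH] H; first by rewrite /Pc /= coprime1n.
rewrite /Pc /= coprimeMl; apply/andP; split; first by apply: IH; lia.
case: ifP => [/andP[pN _]|_]; last exact: coprime1n.
rewrite prime_coprime // dvdn_prime2 //; apply/negP => /eqP; lia.
Qed.

Lemma Pc_dvd (c : nat -> bool) N X : (forall m, m < N -> prime m -> c m -> m %| X) -> Pc c N %| X.
Proof.
elim: N => [|N IH] H; first by rewrite /Pc /= dvd1n.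
rewrite /Pc /=. case: ifP => [/andP[pN cN]|_]; last first.
  rewrite muln1; apply: IH => m Hm; apply: H; lia.
rewrite Gauss_dvd; last by apply: Pc_coprime.
apply/andP; split; [apply: IH => m Hm; apply: H => //; lia | exact: H].
Qed.

Lemma Pc_le (c : nat -> bool) N X : 0 < X -> (forall m, m < N -> prime m -> c m -> m %| X) -> Pc c N <= X.
Proof. move=> X0 H; apply: dvdn_leq => //; exact: Pc_dvd. Qed.

Lemma Pc_ext c c' N : (forall m, m < N -> prime m -> c m = c' m) -> Pc c N = Pc c' N.
Proof.
move=> H; apply: prodn_ext => m Hm; case pm: (prime m) => //=; by rewrite H.
Qed.

Lemma Pc_split c d N : Pc c N = Pc (fun m => c m && d m) N * Pc (fun m => c m && ~~ d m) N.
Proof.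
rewrite /Pc -prodnM; apply: prodn_ext => m _.
case: (prime m) => /=; last by [].
case: (c m) => /=; last by []. by case: (d m) => /=; rewrite ?muln1 ?mul1n.
Qed.

Lemma Pc_stop c N N' : N <= N' -> (forall m, N <= m -> c m = false) -> Pc c N' = Pc c N.
Proof.
move=> H1 H2; elim: N' H1 => [|N' IH] H1.
  by have -> : N = 0 by lia.
case: (ltngtP N N'.+1) => h; last by rewrite h.
  rewrite /Pc /= -/(Pc c N') IH; last by lia.
  by rewrite H2 ?andbF ?muln1 //; lia.
lia.
Qed.

Lemma sum_bin n : \sum_(i < n.+1) 'C(n, i) = 2 ^ n.
Proof.
have := expnDn 1 1 n. rewrite /= => ->. apply: eq_bigr => i _. by rewrite !exp1n !muln1.
Qed.

Lemma bin_mid_le m : 'C(m.*2.+1, m) <= 4 ^ m.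
Proof.
have H := sum_bin m.*2.+1.
have Hm : m < m.*2.+2 by lia.
have Hm1 : m.+1 < m.*2.+2 by lia.
rewrite (bigD1 (Ordinal Hm)) //= (bigD1 (Ordinal Hm1)) //= in H; last first.
  by apply/eqP => /(congr1 val) /=; lia.
have e : 'C(m.*2.+1, m.+1) = 'C(m.*2.+1, m).
  by rewrite -bin_sub; [congr 'C(_, _); lia | lia].
rewrite e in H.
have : 'C(m.*2.+1, m) + 'C(m.*2.+1, m) <= 2 ^ m.*2.+1 by rewrite -H addnA leq_addr.
have -> : 2 ^ m.*2.+1 = 2 * 4 ^ m by rewrite expnS -mul2n expnM.
lia.
Qed.

Definition primorial n := Pc (fun _ => true) n.+1.

Lemma primes_mid_dvd m : Pc (fun p => m.+2 <= p) m.*2.+2 %| 'C(m.*2.+1, m).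
Proof.
apply: Pc_dvd => p Hp pp Hmp.
have Hf := bin_fact (n := m.*2.+1) (m := m) ltac:(lia).
have : p %| (m.*2.+1)`! by apply: dvdn_fact; rewrite prime_gt0 //=; lia.
rewrite -Hf !Euclid_dvdM // => /orP[//|/orP[]] H.
  by move: (@prime_not_dvd_fact p m pp ltac:(lia)); rewrite H.
move: (@prime_not_dvd_fact p (m.*2.+1 - m) pp ltac:(lia)); by rewrite H.
Qed.

Lemma cheb n : primorial n <= 4 ^ n.
Proof.
elim: n {-2}n (leqnn n) => [|N IH] n Hn.
  by have -> : n = 0 by lia.
case: (leqP n 2) => Hn2.
  case: n Hn Hn2 => [|[|[|]]] //= _ _; rewrite /primorial /Pc /=; done.
case/boolP: (odd n) => on.
  have [m Hm] : exists m, n = m.*2.+1 by exists n./2; rewrite -[n in n = _]odd_double_half on add1n.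
  subst n.
  rewrite /primorial (Pc_split _ (fun p => p < m.+2)) /=.
  have e1 : Pc (fun m0 => true && (m0 < m.+2)) m.*2.+2 = primorial m.+1.
    rewrite /primorial (@Pc_stop _ m.+2 m.*2.+2); last first.
      by move=> j Hj; apply/negbTE; rewrite -leqNgt.
      lia.
    by apply: Pc_ext => j Hj _; rewrite Hj.
  have e2 : Pc (fun m0 => true && ~~ (m0 < m.+2)) m.*2.+2 = Pc (fun p => m.+2 <= p) m.*2.+2.
    by apply: Pc_ext => j _ _; rewrite /= -leqNgt.
  rewrite e1 e2.
  have h1 := IH m.+1 ltac:(lia).
  have h2 : Pc (fun p => m.+2 <= p) m.*2.+2 <= 4 ^ m.
    apply: leq_trans (bin_mid_le m).
    apply: dvdn_leq; last exact: primes_mid_dvd.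
    by rewrite bin_gt0; lia.
  have -> : 4 ^ m.*2.+1 = 4 ^ m.+1 * 4 ^ m by rewrite -expnD; congr (_ ^ _); lia.
  exact: leq_mul.
have np : ~~ prime n.
  apply/negP => pn. have := even_prime pn. move=> [e|]; [lia|]. by rewrite (negbTE on).
case: n Hn Hn2 on np => [|n] Hn Hn2 on np; first lia.
rewrite /primorial /Pc /= (negbTE np) muln1 -/(Pc _ n.+1) -/(primorial n).
apply: leq_trans (IH n ltac:(lia)) _.
by rewrite leq_exp2l.
Qed.

Lemma rad_le m : 0 < m -> Pc (fun p => p %| m) m.+1 <= m.
Proof. move=> m0; apply: Pc_le => // p _ _ //. Qed.

Definition Lg n := prodn (fun p => if prime p then p ^ (n %/ p) else 1) n.+1.

Lemma Lg_le n : Lg n <= n`!.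
Proof.
elim: n => [|n IH]; first by rewrite /Lg /=.
have e : Lg n.+1 = prodn (fun p => if prime p then p ^ (n %/ p) else 1) n.+2 *
                   Pc (fun p => p %| n.+1) n.+2.
  rewrite /Pc -prodnM /Lg; apply: prodn_ext => p _.
  case pp: (prime p) => //=.
  rewrite divnS ?prime_gt0 // expnD mulnC; case: (p %| n.+1) => /=.
  by rewrite expn1. by rewrite expn0 muln1.
rewrite e /= -/(Lg n).
have -> : n %/ n.+1 = 0 by rewrite divn_small.
rewrite expn0 if_same muln1 factS mulnC.
apply: leq_mul => //.
exact: rad_le.
Qed.

Definition periodic (A : pred nat) M := forall y, A (y + M) = A y.

Lemma periodic_mul (A : pred nat) M : periodic A M -> forall y j, A (y + j * M) = A y.
Proof.
move=> H y; elim=> [|j IH]; first by rewrite mul0n addn0.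
have -> : y + j.+1 * M = (y + j * M) + M by rewrite mulSn; lia.
by rewrite H IH.
Qed.

Lemma periodic_mod (A : pred nat) M : 0 < M -> periodic A M -> forall y, A y = A (y %% M).
Proof.
move=> M0 H y. rewrite {1}(divn_eq y M) addnC. by rewrite periodic_mul.
Qed.

Lemma count_iota_sum (P : pred nat) a n : count P (iota a n) = \sum_(i < n) P (a + i).
Proof.
elim: n a => [|n IH] a; first by rewrite big_ord0.
rewrite big_ord_recl /= IH addn0; congr (_ + _).
by apply: eq_bigr => i _; rewrite /bump /= addSnnS add1n.
Qed.

Lemma sum_perm (B : pred nat) q M c : 0 < q -> coprime M q -> periodic B q ->
  \sum_(j < q) B (c + j * M) = count B (iota 0 q).
Proof.
move=> q0 cop per.
rewrite count_iota_sum.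
pose h (j : 'I_q) : 'I_q := Ordinal (ltn_pmod (c + j * M) q0).
have hinj : injective h.
  move=> j1 j2 /(congr1 val) /= /eqP. rewrite eqn_modDl => E.
  apply: val_inj => /=.
  wlog le12 : j1 j2 E / j1 <= j2.
    move=> W. case: (leqP j1 j2) => h12; first exact: W.
    apply/esym/W; [by rewrite eq_sym | exact: ltnW].
  move: E; rewrite eq_sym eqn_mod_dvd ?leq_mul2r ?le12 ?orbT // -mulnBl.
  rewrite Gauss_dvdl; last by rewrite coprime_sym.
  move=> D. have : j2 - j1 < q by have := ltn_ord j2; lia.
  move=> lt; have := dvdn_leq; case: (posnP (j2 - j1)) => z; first lia.
  move=> /(_ _ _ z D); lia.
rewrite [RHS](reindex_inj hinj) /=.
apply: eq_bigr => j _. by rewrite add0n (@periodic_mod B q q0 per (c + j * M)).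
Qed.

Lemma count_shift (A : pred nat) M a : 0 < M -> periodic A M ->
  count A (iota a M) = count A (iota 0 M).
Proof.
move=> M0 per; rewrite count_iota_sum -(@sum_perm A M 1 a M0 (coprime1n M) per).
by apply: eq_bigr => j _; rewrite muln1.
Qed.

Lemma count_blocks (P : pred nat) a M t :
  count P (iota a (t * M)) = \sum_(j < t) count P (iota (a + j * M) M).
Proof.
elim: t => [|t IH]; first by rewrite big_ord0.
by rewrite big_ord_recr /= mulSn addnC iotaD count_cat IH.
Qed.

Lemma crt_count (A B : pred nat) M q a : 0 < M -> 0 < q -> coprime M q ->
  periodic A M -> periodic B q ->
  count (fun y => A y && B y) (iota a (M * q)) = count A (iota 0 M) * count B (iota 0 q).
Proof.
move=> M0 q0 cop pA pB.
rewrite mulnC count_blocks.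
have e : forall j : 'I_q, count (fun y => A y && B y) (iota (a + j * M) M) =
          \sum_(s < M) A (a + s) * B ((a + s) + j * M).
  move=> j; rewrite count_iota_sum; apply: eq_bigr => s _.
  have -> : a + j * M + s = (a + s) + j * M by lia.
  by rewrite periodic_mul // mulnb.
rewrite (eq_bigr _ (fun j _ => e j)) exchange_big /=.
rewrite -(@count_shift A M a M0 pA) count_iota_sum big_distrl /=.
apply: eq_bigr => s _. by rewrite -big_distrr /= sum_perm.
Qed.

Lemma prime_Z p : prime p -> Znumtheory.prime (Z.of_nat p).
Proof.
move=> /primeP [p1 Hp].
apply/prime_alt; split; first lia.
move=> n Hn [c Hc].
have c0 : (0 <= c)%Z by nia.
have : (Z.to_nat n %| p).
  apply/dvdnP; exists (Z.to_nat c). apply: Nat2Z.inj. rewrite Nat2Z.inj_mul !Z2Nat.id; lia.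
move=> /Hp /orP [] /eqP; lia.
Qed.

Lemma Z_prime_nat (z : Z) : Znumtheory.prime z -> exists n, z = Z.of_nat n /\ prime n.
Proof.
move=> pz. have z1 : (1 < z)%Z by case: pz.
exists (Z.to_nat z); split; first lia.
apply/primeP; split; first lia.
move=> d /dvdnP [e He].
have : (Z.of_nat d | z)%Z.
  exists (Z.of_nat e). nia.
move=> /(prime_divisors _ pz) H.
apply/orP; case: H => [|[|[|]]] H; lia.
Qed.

Definition zdvdb (p v : Z) : bool := Z.eqb (Z.modulo v p) 0.

Lemma zdvdbP p v : p <> 0%Z -> zdvdb p v = true <-> (p | v)%Z.
Proof. move=> p0; rewrite /zdvdb Z.eqb_eq; exact: Z.mod_divide. Qed.

Fixpoint is_poly (d : nat) (f : Z -> Z) : Prop :=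
  match d with
  | O => forall z, f z = f 0%Z
  | S d' => forall r, exists h, is_poly d' h /\ forall z, f z = (f r + (z - r) * h z)%Z
  end.

Lemma is_poly_const d c : is_poly d (fun _ => c).
Proof.
elim: d c => [|d IH] c //= r. exists (fun _ => 0%Z); split; [exact: IH | move=> z; lia].
Qed.

Lemma is_poly_S d f : is_poly d f -> is_poly (S d) f.
Proof.
elim: d f => [|d IH] f /= H r.
  exists (fun _ => 0%Z); split => // z. rewrite (H z) (H r); lia.
have [h [Hh E]] := H r. exists h; split => //; exact: IH.
Qed.

Lemma is_poly_add d f g : is_poly d f -> is_poly d g -> is_poly d (fun z => f z + g z)%Z.
Proof.
elim: d f g => [|d IH] f g /= Hf Hg.
  move=> z; rewrite Hf Hg //.
move=> r. have [h1 [H1 E1]] := Hf r. have [h2 [H2 E2]] := Hg r.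
exists (fun z => h1 z + h2 z)%Z; split; first exact: IH.
move=> z; rewrite E1 E2; lia.
Qed.

Lemma is_poly_scal d c f : is_poly d f -> is_poly d (fun z => c * f z)%Z.
Proof.
elim: d f => [|d IH] f /= Hf.
  move=> z; rewrite Hf //.
move=> r. have [h1 [H1 E1]] := Hf r.
exists (fun z => c * h1 z)%Z; split; first exact: IH.
move=> z; rewrite E1; lia.
Qed.

Lemma is_poly_mullin d f a : is_poly d f -> is_poly (S d) (fun z => f z * (z - a))%Z.
Proof.
elim: d f => [|d IH] f Hf r.
  exists (fun _ => f 0%Z); split => //= z.
  rewrite (Hf z) (Hf r); ring.
have [h [Hh E]] := Hf r.
exists (fun z => h z * (z - a) + f r)%Z; split.
  apply: (@is_poly_add (S d) (fun z => h z * (z - a))%Z (fun _ => f r)); first exact: IH.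
  exact: is_poly_const.
move=> z; rewrite (E z); ring.
Qed.

Fixpoint Fz (z : Z) (i : nat) : Z :=
  match i with O => 1%Z | S i' => (Fz z i' * (z - Z.of_nat i'))%Z end.

Lemma is_poly_Fz i : is_poly i (fun z => Fz z i).
Proof.
elim: i => [|i IH] /=; first by [].
exact: is_poly_mullin.
Qed.

Lemma Fz_ffact y i : Z.of_nat (y ^_ i) = Fz (Z.of_nat y) i.
Proof.
elim: i => [|i IH] //=.
rewrite ffactnSr Nat2Z.inj_mul IH.
case: (leqP i y) => h.
  by rewrite Nat2Z.inj_sub //; apply/leP.
rewrite -IH ffact_small //=.
Qed.

Lemma small_diff_dvd (p : Z) (r r0 : nat) : (Z.of_nat r0 < p)%Z -> (Z.of_nat r < p)%Z ->
  (p | Z.of_nat r - Z.of_nat r0)%Z -> r = r0.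
Proof.
move=> h1 h2 [c Hc].
have : c = 0%Z by nia.
move=> c0; rewrite c0 in Hc; lia.
Qed.

Lemma root_count d : forall f, is_poly d f -> forall p : nat, Znumtheory.prime (Z.of_nat p) ->
  forall m, ~ (Z.of_nat p | f m)%Z ->
  count (fun r => zdvdb (Z.of_nat p) (f (Z.of_nat r))) (iota 0 p) <= d.
Proof.
have p0 : forall p : nat, Znumtheory.prime (Z.of_nat p) -> Z.of_nat p <> 0%Z.
  by move=> p [h _]; lia.
elim: d => [|d IH] f Hf p pp m Hm.
  rewrite leqn0 eqn0Ngt -has_count; apply/hasPn => r _.
  apply/negP => /(zdvdbP _ _ (p0 p pp)) H; apply: Hm.
  by rewrite (Hf m) -(Hf (Z.of_nat r)).
case/boolP: (has (fun r => zdvdb (Z.of_nat p) (f (Z.of_nat r))) (iota 0 p)); last first.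
  by rewrite has_count -leqNgt => /leq_trans; apply.
move=> /hasP [r0 Hr0 /(zdvdbP _ _ (p0 p pp)) Pr0].
have [h [Hh E]] := Hf (Z.of_nat r0).
rewrite mem_iota /= in Hr0.
set P := (fun r => _).
have e1 : count P (iota 0 p) = count (fun r => P r && (r < p)) (iota 0 p).
  by apply: eq_in_count => r; rewrite mem_iota /= => ->; rewrite andbT.
rewrite e1.
set Q := (fun r : nat => zdvdb (Z.of_nat p) (h (Z.of_nat r))).
have sub : subpred (fun r => P r && (r < p)) (predU (pred1 r0) Q).
  move=> r /andP [/(zdvdbP _ _ (p0 p pp)) Pr rp] /=.
  rewrite (E (Z.of_nat r)) in Pr.
  have : (Z.of_nat p | (Z.of_nat r - Z.of_nat r0) * h (Z.of_nat r))%Z.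
    have := Z.divide_sub_r _ _ _ Pr Pr0. by rewrite Z.add_simpl_l.
  move=> /(prime_mult _ pp) [D|D].
    apply/orP; left; apply/eqP; apply: (@small_diff_dvd (Z.of_nat p)) => //; lia.
  by apply/orP; right; apply/zdvdbP => //; exact: p0.
have h1 := sub_count sub (iota 0 p).
have h2 := count_predUI (pred1 r0) Q (iota 0 p).
have c1 : count (pred1 r0) (iota 0 p) = 1.
  by rewrite count_uniq_mem ?iota_uniq // mem_iota /= Hr0.
have cQ : count Q (iota 0 p) <= d.
  apply: (IH h Hh p pp m) => D. apply: Hm. rewrite (E m).
  apply: Z.divide_add_r => //. exact: Z.divide_mul_r.
apply: (leq_trans h1).
apply: (@leq_trans (count (pred1 r0) (iota 0 p) + count Q (iota 0 p))).
  by rewrite -h2 leq_addr.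
by rewrite c1 add1n ltnS.
Qed.

Lemma nat_mod_Z (p a b : nat) : a = b %[mod p] -> (Z.of_nat p | Z.of_nat a - Z.of_nat b)%Z.
Proof.
move=> H.
exists (Z.of_nat (a %/ p) - Z.of_nat (b %/ p))%Z.
have Ha := divn_eq a p. have Hb := divn_eq b p.
have : Z.of_nat a = (Z.of_nat (a %/ p) * Z.of_nat p + Z.of_nat (a %% p))%Z.
  by rewrite {1}Ha Nat2Z.inj_add Nat2Z.inj_mul.
have : Z.of_nat b = (Z.of_nat (b %/ p) * Z.of_nat p + Z.of_nat (b %% p))%Z.
  by rewrite {1}Hb Nat2Z.inj_add Nat2Z.inj_mul.
rewrite H => e1 e2. rewrite e1 e2. ring.
Qed.

Lemma fact_dvd j k : j <= k -> j`! %| k`!.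
Proof.
move=> H. rewrite -(ffact_fact (n := k) (m := k - j)); last by lia.
have -> : k - (k - j) = j by lia.
exact: dvdn_mull.
Qed.

Lemma Pbin_aux_period alpha p E y j : prime p -> (forall i, i <= j -> ~~ (p ^ E %| i`!)) ->
  (Z.of_nat p | Pbin_aux alpha j (y + p ^ E) - Pbin_aux alpha j y)%Z.
Proof.
move=> pp H; elim: j H => [|j IH] H /=.
  by rewrite !binomE !bin0; exists 0%Z; lia.
have e : (Pbin_aux alpha j (y + p ^ E) + alpha j.+1 * Z.of_nat (binom (y + p ^ E) j.+1) -
   (Pbin_aux alpha j y + alpha j.+1 * Z.of_nat (binom y j.+1)) =
   (Pbin_aux alpha j (y + p ^ E) - Pbin_aux alpha j y) +
   alpha j.+1 * (Z.of_nat (binom (y + p ^ E) j.+1) - Z.of_nat (binom y j.+1)))%Z by ring.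
rewrite e; apply: Z.divide_add_r.
  apply: IH => i Hi; apply: H; lia.
apply: Z.divide_mul_r; rewrite !binomE; apply: nat_mod_Z.
apply: (@binom_period p E y j.+1 pp); exact: H.
Qed.

Definition Ek k p := if p <= k then k`! else 1.
Definition qm k p := p ^ Ek k p.
Definition gp k alpha p : pred nat := fun y => ~~ zdvdb (Z.of_nat p) (Pbin k alpha y).
Definition cnt k alpha p := count (gp k alpha p) (iota 0 (qm k p)).

Lemma leq_fact' i k : i <= k -> i`! <= k`!.
Proof. move=> H; apply: dvdn_leq; [exact: fact_gt0 | exact: fact_dvd]. Qed.

Lemma not_dvd_fact_E k p i : prime p -> i <= k -> ~~ (p ^ Ek k p %| i`!).
Proof.
move=> pp ik; rewrite /Ek; case: leqP => hp.
  apply/negP => /(dvdn_leq (fact_gt0 i)) H.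
  have h1 : k`! < 2 ^ k`! by apply: ltn_expl.
  have h2 : 2 ^ k`! <= p ^ k`! by rewrite leq_exp2r ?fact_gt0 ?prime_gt1.
  have h3 := @leq_fact' i k ik. lia.
rewrite expn1; apply: prime_not_dvd_fact => //; lia.
Qed.

Lemma qm_gt0 k p : prime p -> 0 < qm k p.
Proof. move=> pp; by rewrite /qm expn_gt0 prime_gt0. Qed.

Lemma dvd_iff_diff (p A B : Z) : (p | A - B)%Z -> ((p | A) <-> (p | B))%Z.
Proof.
move=> H; split => H1.
  have := Z.divide_sub_r _ _ _ H1 H. by have -> : (A - (A - B) = B)%Z by ring.
have := Z.divide_add_r _ _ _ H H1. by have -> : (A - B + B = A)%Z by ring.
Qed.

Lemma gp_periodic k alpha p : prime p -> periodic (gp k alpha p) (qm k p).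
Proof.
move=> pp y. rewrite /gp; congr negb.
have p0 : Z.of_nat p <> 0%Z by have := prime_gt0 pp; lia.
have H := @Pbin_aux_period alpha p (Ek k p) y k pp (fun i hi => @not_dvd_fact_E k p i pp hi).
have := @dvd_iff_diff _ _ _ H.
case: (zdvdb _ (Pbin k alpha (y + qm k p))) (zdvdbP (Z.of_nat p) (Pbin k alpha (y + qm k p)) p0);
case: (zdvdb _ (Pbin k alpha y)) (zdvdbP (Z.of_nat p) (Pbin k alpha y) p0) => //.
- move=> [_ h1] [h2 _] [h3 _]. by have := h1 (h3 (h2 erefl)).
- move=> [h1 _] [_ h2] [_ h3]. by have := h2 (h3 (h1 erefl)).
Qed.

Lemma sum_vals_dvd (P : nat -> Z) (p : Z) S : (forall m, (p | P m)%Z) -> (p | sum_vals P S)%Z.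
Proof.
move=> H; elim: S => [|m S IH] /=; first exact: Z.divide_0_r.
exact: Z.divide_add_r.
Qed.

Lemma complete_nondiv (P : nat -> Z) p : complete P -> 1 < p ->
  exists m, ~ (Z.of_nat p | P m)%Z.
Proof.
move=> [N HN] p1.
apply: Classical_Prop.NNPP => Hn.
have Hall : forall m, (Z.of_nat p | P m)%Z.
  move=> m; apply: Classical_Prop.NNPP => Hm; apply: Hn; by exists m.
have [S [_ [_ HS]]] := HN (N * p + 1) ltac:(apply/leP; nia) ltac:(apply/leP; lia).
have := @sum_vals_dvd P (Z.of_nat p) S Hall. rewrite HS.
have -> : Z.of_nat (N * p + 1) = (Z.of_nat N * Z.of_nat p + 1)%Z by lia.
move=> D.
have : (Z.of_nat p | 1)%Z.
  have := Z.divide_sub_r _ _ _ D (Z.divide_factor_l (Z.of_nat p) (Z.of_nat N)).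
  by have -> : (Z.of_nat N * Z.of_nat p + 1 - Z.of_nat p * Z.of_nat N = 1)%Z by ring.
move=> /Z.divide_1_r; lia.
Qed.

Lemma cnt_pos k alpha p : prime p -> complete (Pbin k alpha) -> 0 < cnt k alpha p.
Proof.
move=> pp C.
have [m Hm] := @complete_nondiv (Pbin k alpha) p C (prime_gt1 pp).
have p0 : Z.of_nat p <> 0%Z by have := prime_gt0 pp; lia.
rewrite /cnt -has_count; apply/hasP; exists (m %% qm k p).
  by rewrite mem_iota /= ltn_pmod // qm_gt0.
rewrite -(@periodic_mod _ _ (@qm_gt0 k p pp) (@gp_periodic k alpha p pp)).
rewrite /gp; apply/negP => /(zdvdbP _ _ p0); exact: Hm.
Qed.

Fixpoint Gaux (alpha : nat -> Z) (k j : nat) (z : Z) : Z :=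
  match j with
  | O => (alpha 0%N * Z.of_nat (k`! %/ 0`!) * Fz z 0%N)%Z
  | S j' => (Gaux alpha k j' z + alpha j * Z.of_nat (k`! %/ j`!) * Fz z j)%Z
  end.

Lemma is_poly_le d d' f : d <= d' -> is_poly d f -> is_poly d' f.
Proof.
move=> H; elim: d' H => [|d' IH] H Hf.
  have e : d = 0 by lia.
  by rewrite e in Hf.
case: (leqP d d') => h.
  apply: is_poly_S; exact: IH.
by have -> : d' .+1 = d by lia.
Qed.

Lemma Gaux_poly alpha k j : j <= k -> is_poly k (Gaux alpha k j).
Proof.
elim: j => [|j IH] H.
  by apply: (@is_poly_le 0) => //= z.
change (is_poly k (fun z => Gaux alpha k j z + alpha j.+1 * Z.of_nat (k`! %/ j.+1`!) * Fz z j.+1)%Z).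
apply: (@is_poly_add k (Gaux alpha k j) (fun z => alpha j.+1 * Z.of_nat (k`! %/ j.+1`!) * Fz z j.+1)%Z).
  apply: IH; lia.
apply: (@is_poly_le j.+1) => //.
exact: (@is_poly_scal j.+1 (alpha j.+1 * Z.of_nat (k`! %/ j.+1`!))%Z (fun z => Fz z j.+1) (is_poly_Fz j.+1)).
Qed.

Lemma Gaux_term k j y : j <= k ->
  (Z.of_nat (k`! %/ j`!) * Fz (Z.of_nat y) j = Z.of_nat k`! * Z.of_nat (binom y j))%Z.
Proof.
move=> H.
rewrite -Fz_ffact -bin_ffact binomE -!Nat2Z.inj_mul. congr Z.of_nat.
have e := divnK (@fact_dvd j k H). nia.
Qed.

Lemma Gaux_val alpha k j y : j <= k ->
  Gaux alpha k j (Z.of_nat y) = (Z.of_nat k`! * Pbin_aux alpha j y)%Z.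
Proof.
elim: j => [|j IH] H.
  change (alpha 0%N * Z.of_nat (k`! %/ 0`!) * Fz (Z.of_nat y) 0%N = Z.of_nat k`! * (alpha 0%N * Z.of_nat (binom y 0)))%Z.
  rewrite -Z.mul_assoc (@Gaux_term k 0 y H); ring.
change (Gaux alpha k j (Z.of_nat y) + alpha j.+1 * Z.of_nat (k`! %/ j.+1`!) * Fz (Z.of_nat y) j.+1 = Z.of_nat k`! * (Pbin_aux alpha j y + alpha j.+1 * Z.of_nat (binom y j.+1)))%Z.
rewrite IH; last lia.
rewrite -Z.mul_assoc (@Gaux_term k j.+1 y H); ring.
Qed.

Lemma zdvdb_mul_coprime (p : nat) (c v : Z) : Znumtheory.prime (Z.of_nat p) ->
  ~ (Z.of_nat p | c)%Z -> zdvdb (Z.of_nat p) (c * v) = zdvdb (Z.of_nat p) v.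
Proof.
move=> pp Hc.
have p0 : Z.of_nat p <> 0%Z by case: pp; lia.
apply/idP/idP => /(zdvdbP _ _ p0) H; apply/(zdvdbP _ _ p0).
  by case: (prime_mult _ pp _ _ H).
exact: Z.divide_mul_r.
Qed.

Lemma prime_not_dvd_fact_Z p k : prime p -> k < p -> ~ (Z.of_nat p | Z.of_nat k`!)%Z.
Proof.
move=> pp hk [c Hc].
have c0 : (0 <= c)%Z.
  have := prime_gt0 pp. have := fact_gt0 k. nia.
move: (@prime_not_dvd_fact p k pp hk) => /negP; apply; apply/dvdnP.
exists (Z.to_nat c). apply: Nat2Z.inj. rewrite Nat2Z.inj_mul Z2Nat.id //.
Qed.

Lemma cnt_large k alpha p : prime p -> k < p -> complete (Pbin k alpha) ->
  p - k <= cnt k alpha p.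
Proof.
move=> pp kp C.
have ppZ := @prime_Z p pp.
have hq : qm k p = p by rewrite /qm /Ek; case: leqP => h; [lia | by rewrite expn1].
rewrite /cnt hq.
have := count_predC (gp k alpha p) (iota 0 p). rewrite size_iota.
suff : count (predC (gp k alpha p)) (iota 0 p) <= k by lia.
have nf := @prime_not_dvd_fact_Z p k pp kp.
have e : forall r, predC (gp k alpha p) r =
    zdvdb (Z.of_nat p) (Gaux alpha k k (Z.of_nat r)).
  move=> r; rewrite /= /gp negbK Gaux_val // zdvdb_mul_coprime //.
rewrite (eq_count e).
have [m Hm] := @complete_nondiv (Pbin k alpha) p C (prime_gt1 pp).
apply: (@root_count k (Gaux alpha k k) (@Gaux_poly alpha k k (leqnn k)) p ppZ (Z.of_nat m)).
rewrite Gaux_val // => D.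
case: (prime_mult _ ppZ _ _ D) => //.
Qed.

Fixpoint Gall k alpha n y : bool :=
  match n with O => true | S n' => Gall k alpha n' y && (if prime n' then gp k alpha n' y else true) end.
Definition Qall k n := prodn (fun m => if prime m then qm k m else 1) n.
Definition Call k alpha n := prodn (fun m => if prime m then cnt k alpha m else 1) n.

Lemma Qall_gt0 k n : 0 < Qall k n.
Proof. apply: prodn_gt0 => m; case: ifP => // pm; exact: qm_gt0. Qed.

Lemma Qall_coprime k n : prime n -> coprime (Qall k n) (qm k n).
Proof.
move=> pn; rewrite /qm; apply: coprimeXr.
have : forall j, j <= n -> coprime (Qall k j) n.
  elim=> [|j IH] H; first by rewrite /Qall /= coprime1n.
  rewrite /Qall /= coprimeMl; apply/andP; split; first by apply: IH; lia.
  case: ifP => pj; last exact: coprime1n.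
  rewrite /qm; apply: coprimeXl.
  rewrite prime_coprime // dvdn_prime2 //; apply/negP => /eqP; lia.
by apply.
Qed.

Lemma Gall_props k alpha n :
  periodic (Gall k alpha n) (Qall k n) /\
  count (Gall k alpha n) (iota 0 (Qall k n)) = Call k alpha n.
Proof.
elim: n => [|n [IHp IHc]].
  by split => //= y.
case/boolP: (prime n) => pn.
  have Q0 := Qall_gt0 k n. have q0 := @qm_gt0 k n pn.
  have cop := @Qall_coprime k n pn.
  have pg := @gp_periodic k alpha n pn.
  split.
    move=> y /=; rewrite pn /Qall /= pn -/(Qall k n).
    have e1 : Gall k alpha n (y + Qall k n * qm k n) = Gall k alpha n y.
      by rewrite mulnC (@periodic_mul _ _ IHp y (qm k n)).
    have e2 : gp k alpha n (y + Qall k n * qm k n) = gp k alpha n y.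
      by rewrite (@periodic_mul _ _ pg y (Qall k n)).
    by rewrite e1 e2.
  have eQ : Qall k n.+1 = Qall k n * qm k n by rewrite /Qall /= pn.
  have eC : Call k alpha n.+1 = Call k alpha n * cnt k alpha n by rewrite /Call /= pn.
  have e : (Gall k alpha n.+1) =1 (fun y => Gall k alpha n y && gp k alpha n y).
    by move=> y /=; rewrite pn.
  rewrite eQ eC (eq_count e) (@crt_count _ _ _ _ 0 Q0 q0 cop IHp pg) IHc //.
split.
  move=> y /=; rewrite (negbTE pn) !andbT /Qall /= (negbTE pn) muln1 -/(Qall k n).
  exact: IHp.
have e : (Gall k alpha n.+1) =1 (Gall k alpha n) by move=> y /=; rewrite (negbTE pn) andbT.
have eQ : Qall k n.+1 = Qall k n by rewrite /Qall /= (negbTE pn) muln1.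
have eC : Call k alpha n.+1 = Call k alpha n by rewrite /Call /= (negbTE pn) muln1.
by rewrite eQ eC (eq_count e).
Qed.

Lemma count_window k alpha n a L :
  (L %/ Qall k n) * Call k alpha n <= count (Gall k alpha n) (iota a L).
Proof.
have [Hp Hc] := Gall_props k alpha n.
have Q0 := Qall_gt0 k n.
rewrite {2}(divn_eq L (Qall k n)) iotaD count_cat.
apply: leq_trans (leq_addr _ _).
rewrite count_blocks.
have -> : \sum_(j < L %/ Qall k n) count (Gall k alpha n) (iota (a + j * Qall k n) (Qall k n))
          = \sum_(j < L %/ Qall k n) Call k alpha n.
  by apply: eq_bigr => j _; rewrite count_shift.
by rewrite sum_nat_const card_ord.
Qed.

Open Scope R_scope.

Fixpoint sumr (f : nat -> R) (n : nat) : R :=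
  match n with O => 0 | S n' => sumr f n' + f n' end.
Fixpoint prodr (f : nat -> R) (n : nat) : R :=
  match n with O => 1 | S n' => prodr f n' * f n' end.

Lemma sumr_le f g n : (forall m, (m < n)%N -> f m <= g m) -> sumr f n <= sumr g n.
Proof.
elim: n => [|n IH] H /=; first lra.
have h1 : sumr f n <= sumr g n by apply: IH => m Hm; apply: H; lia.
have h2 := H n (ltnSn n). lra.
Qed.

Lemma sumr_add f g n : sumr (fun m => f m + g m) n = sumr f n + sumr g n.
Proof. elim: n => [|n IH] /=; [lra | rewrite IH; lra]. Qed.

Lemma sumr_scal c f n : sumr (fun m => c * f m) n = c * sumr f n.
Proof. elim: n => [|n IH] /=; [lra | rewrite IH; lra]. Qed.

Lemma sumr_ge0 f n : (forall m, (m < n)%N -> 0 <= f m) -> 0 <= sumr f n.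
Proof. move=> H; have := @sumr_le (fun _ => 0) f n H. have -> : sumr (fun _ => 0) n = 0.
  by elim: n {H} => [|n IH] //=; rewrite IH; lra.
done. Qed.

Lemma prodr_le f g n : (forall m, (m < n)%N -> 0 <= f m <= g m) -> prodr f n <= prodr g n.
Proof.
elim: n => [|n IH] H /=; first lra.
have h0 : forall j, (j <= n)%N -> 0 <= prodr f j.
  elim=> [|j IHj] hj /=; first lra.
  have := H j ltac:(lia). have := IHj ltac:(lia). nra.
have h1 : prodr f n <= prodr g n by apply: IH => m Hm; apply: H; lia.
have h2 := H n (ltnSn n). have h3 := h0 n (leqnn n). nra.
Qed.

Lemma prodr_exp h n : prodr (fun m => exp (h m)) n = exp (sumr h n).
Proof. elim: n => [|n IH] /=; [by rewrite exp_0 | by rewrite IH exp_plus]. Qed.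

Lemma INR_muln a b : INR (a * b)%N = INR a * INR b.
Proof. by rewrite -multE mult_INR. Qed.

Lemma INR_expn a b : INR (a ^ b)%N = INR a ^ b.
Proof. elim: b => [|b IH]; first by rewrite expn0. by rewrite expnS INR_muln IH. Qed.

Lemma INR_prodn f n : INR (prodn f n) = prodr (fun m => INR (f m)) n.
Proof. elim: n => [|n IH] //=. by rewrite INR_muln IH. Qed.

Lemma prodr_pos f n : (forall m, (m < n)%N -> 0 < f m) -> 0 < prodr f n.
Proof.
elim: n => [|n IH] H /=; first lra.
apply: Rmult_lt_0_compat; [apply: IH => m Hm; apply: H; lia | apply: H; lia].
Qed.

Lemma ln_prodr f n : (forall m, (m < n)%N -> 0 < f m) -> ln (prodr f n) = sumr (fun m => ln (f m)) n.
Proof.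
elim: n => [|n IH] H /=; first exact: ln_1.
rewrite ln_mult; [rewrite IH //; move=> m Hm; apply: H; lia | | apply: H; lia].
apply: prodr_pos => m Hm; apply: H; lia.
Qed.

Lemma ln_le' x y : 0 < x -> x <= y -> ln x <= ln y.
Proof. move=> h0 h1; case: (Rle_lt_or_eq_dec _ _ h1) => h; [apply: Rlt_le; exact: ln_increasing | rewrite h; lra]. Qed.

Lemma ln_ge_1m u : 0 < u -> 1 - / u <= ln u.
Proof.
move=> u0. have := exp_ineq1_le (ln (/ u)). rewrite exp_ln; last exact: Rinv_0_lt_compat.
rewrite ln_Rinv //. lra.
Qed.

Lemma fact_le_pow n : (n`! <= n ^ n)%N.
Proof.
elim: n => [|n IH] //. rewrite factS expnS leq_mul2l /=.
apply: leq_trans IH _. case: n => [|n] //. by rewrite leq_exp2r.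
Qed.

Lemma sumr_ext f g n : (forall m, (m < n)%N -> f m = g m) -> sumr f n = sumr g n.
Proof. move=> H; apply: Rle_antisym; apply: sumr_le => m Hm; rewrite H //; lra. Qed.

Lemma INR_pos_prime m : prime m -> 0 < INR m.
Proof. move=> pm; apply: lt_0_INR; apply/ltP; exact: prime_gt0. Qed.

Definition theta n := sumr (fun m => if prime m then ln (INR m) else 0) n.+1.
Definition Sl n := sumr (fun m => if prime m then ln (INR m) / INR m else 0) n.+1.

Lemma theta_le n : theta n <= INR n * ln 4.
Proof.
have e : ln (INR (primorial n)) = theta n.
  rewrite /primorial /Pc INR_prodn ln_prodr.
    apply: sumr_ext => m _; case: (prime m) => /=; [done | exact: ln_1].
  move=> m _; case pm: (prime m) => /=; [exact: INR_pos_prime | lra].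
rewrite -e -ln_pow; last lra.
apply: ln_le'.
  apply: lt_0_INR; apply/ltP; rewrite /primorial; apply: Pc_gt0.
have := cheb n. move/leP/le_INR. rewrite INR_expn. by replace (INR 4) with 4 by (simpl; lra).
Qed.

Lemma Lsum_le n : (1 <= n)%N ->
  sumr (fun m => if prime m then INR (n %/ m) * ln (INR m) else 0) n.+1 <= INR n * ln (INR n).
Proof.
move=> n1.
have e : ln (INR (Lg n)) = sumr (fun m => if prime m then INR (n %/ m) * ln (INR m) else 0) n.+1.
  rewrite /Lg INR_prodn ln_prodr.
    apply: sumr_ext => m _; case pm: (prime m) => /=; last exact: ln_1.
    by rewrite INR_expn ln_pow //; exact: INR_pos_prime.
  move=> m _; case pm: (prime m) => /=; last lra.
  rewrite INR_expn; apply: pow_lt; exact: INR_pos_prime.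
rewrite -e -ln_pow; last by apply: lt_0_INR; apply/ltP.
apply: ln_le'.
  apply: lt_0_INR; apply/ltP; apply: prodn_gt0 => m; case: ifP => // pm.
  by rewrite expn_gt0 prime_gt0.
rewrite -INR_expn; apply: le_INR; apply/leP.
exact: leq_trans (Lg_le n) (fact_le_pow n).
Qed.

Lemma INR_div_ge n m : (0 < m)%N -> INR n / INR m - 1 <= INR (n %/ m).
Proof.
move=> m0.
have hm : 0 < INR m by apply: lt_0_INR; apply/ltP.
have e := divn_eq n m.
have h1 : (n %% m < m)%N by rewrite ltn_pmod.
have : INR n = INR (n %/ m) * INR m + INR (n %% m) by rewrite {1}e -plusE plus_INR INR_muln.
have : INR (n %% m) < INR m by apply: lt_INR; apply/ltP.
move=> h2 h3.
apply: (Rmult_le_reg_r (INR m)) => //.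
rewrite Rmult_minus_distr_r /Rdiv Rmult_assoc Rinv_l; lra.
Qed.

Lemma Sl_le n : (1 <= n)%N -> Sl n <= ln (INR n) + ln 4.
Proof.
move=> n1.
have hn : 0 < INR n by apply: lt_0_INR; apply/ltP.
have h1 := @Lsum_le n n1.
have h2 := theta_le n.
have h3 : INR n * Sl n - theta n <=
   sumr (fun m => if prime m then INR (n %/ m) * ln (INR m) else 0) n.+1.
  rewrite /Sl /theta -sumr_scal.
  have -> : sumr (fun m => INR n * (if prime m then ln (INR m) / INR m else 0)) n.+1 - 
            sumr (fun m => if prime m then ln (INR m) else 0) n.+1 =
            sumr (fun m => INR n * (if prime m then ln (INR m) / INR m else 0) +
                    (-1) * (if prime m then ln (INR m) else 0)) n.+1.
    rewrite sumr_add (sumr_scal (-1)); lra.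
  apply: sumr_le => m _; case pm: (prime m); last lra.
  have hm := @INR_pos_prime m pm.
  have lm : 0 <= ln (INR m).
    rewrite -ln_1; apply: ln_le'; first lra.
    have := prime_gt1 pm; move/ltP/lt_INR; rewrite /=; lra.
  have := @INR_div_ge n m (prime_gt0 pm).
  move=> hd.
  have : (INR n / INR m - 1) * ln (INR m) <= INR (n %/ m) * ln (INR m) by nra.
  have -> : (INR n / INR m - 1) * ln (INR m) = INR n * (ln (INR m) / INR m) + -1 * ln (INR m).
    by field; lra.
  done.
have : INR n * Sl n <= INR n * (ln (INR n) + ln 4) by nra.
move=> h4. apply: (Rmult_le_reg_l (INR n)) => //.
Qed.

Definition Tr n := sumr (fun m => if prime m then / INR m else 0) n.+1.
Definition B0 := 1 + ln 4 / ln 2 - ln (ln 2).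

Lemma ln2_pos : 0 < ln 2.
Proof. have := ln_lt_2. lra. Qed.

Lemma INR2 : INR 2 = 2. Proof. simpl; lra. Qed.

Lemma lnINR_pos N : (2 <= N)%N -> 0 < ln (INR N).
Proof.
move=> H. have := ln2_pos. move=> h. apply: Rlt_le_trans h _. rewrite -INR2.
apply: ln_le'; [simpl; lra | apply: le_INR; apply/leP; done].
Qed.

Lemma T_inv N : (2 <= N)%N ->
  Tr N - Sl N / ln (INR N) <= ln (ln (INR N)) - 1 - ln 4 / ln (INR N) + B0.
Proof.
elim: N => [|N IH] // HN.
case: (ltngtP N 1) => h1; first lia.
  have HN2 : (2 <= N)%N by lia.
  have IH' := IH HN2.
  have LN0 := @lnINR_pos N HN2.
  have LN1 : ln (INR N) < ln (INR N.+1).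
    apply: ln_increasing; [apply: lt_0_INR; apply/ltP; lia | apply: lt_INR; apply/ltP; lia].
  have hS := @Sl_le N ltac:(lia).
  have e : Tr N.+1 - Sl N.+1 / ln (INR N.+1) = Tr N - Sl N / ln (INR N.+1).
    have sS : forall f n, sumr f n.+1 = sumr f n + f n by [].
    rewrite /Tr /Sl (sS _ N.+1) (sS _ N.+1).
    have : 0 < INR N.+1 by apply: lt_0_INR; apply/ltP; lia.
    move=> hn1.
    case: (prime N.+1); field; lra.
  rewrite e.
  have hu := @ln_ge_1m (ln (INR N.+1) / ln (INR N)) ltac:(apply: Rdiv_lt_0_compat; lra).
  rewrite /Rdiv ln_mult in hu; [|lra|apply: Rinv_0_lt_compat; lra].
  rewrite ln_Rinv in hu; last lra.
  set LN := ln (INR N) in IH' LN0 LN1 hS hu *.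
  set LM := ln (INR N.+1) in LN1 hu *.
  set D := Sl N in IH' hS *.
  have iL : 0 < / LN by apply: Rinv_0_lt_compat.
  have iM : 0 < / LM by apply: Rinv_0_lt_compat; lra.
  have dd : / LM <= / LN by apply: Rinv_le_contravar; lra.
  have k1 : D * (/ LN - / LM) <= (LN + ln 4) * (/ LN - / LM) by nra.
  have k2 : (LN + ln 4) * (/ LN - / LM) = 1 - LN * / LM + ln 4 * / LN - ln 4 * / LM.
    by field; lra.
  have k3 : / (LM * / LN) = LN * / LM by field; lra.
  rewrite k3 in hu.
  rewrite /Rdiv in IH' *. lra.
have -> : N = 1%N by lia.
rewrite /Tr /Sl /B0 /=.
have p0 : prime 0 = false by []. have p1 : prime 1 = false by []. have p2 : prime 2 = true by [].
rewrite ?p0 ?p1 ?p2.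
have l2 := ln2_pos.
replace (1 + 1) with 2 by lra.
apply: Req_le; field; lra.
Qed.

Lemma T_le N : (2 <= N)%N -> Tr N <= ln (ln (INR N)) + B0.
Proof.
move=> H. have h1 := @T_inv N H. have h2 := @Sl_le N ltac:(lia).
have L := @lnINR_pos N H.
have : Sl N / ln (INR N) <= (ln (INR N) + ln 4) / ln (INR N).
  apply: Rmult_le_compat_r => //. apply: Rlt_le; exact: Rinv_0_lt_compat.
have -> : (ln (INR N) + ln 4) / ln (INR N) = 1 + ln 4 / ln (INR N) by field; lra.
lra.
Qed.

Lemma prodr_mul f g n : prodr (fun m => f m * g m) n = prodr f n * prodr g n.
Proof. elim: n => [|n IH] /=; [lra | rewrite IH; ring]. Qed.

Lemma prodr_div f g n : (forall m, (m < n)%N -> g m <> 0) ->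
  prodr f n / prodr g n = prodr (fun m => f m / g m) n.
Proof.
elim: n => [|n IH] H /=; first field.
rewrite -IH; last by move=> m Hm; apply: H; lia.
have h1 := H n (ltnSn n).
have h2 : prodr g n <> 0.
  elim: n {IH h1} H => [|j IHj] H /=; first lra.
  apply: Rmult_integral_contrapositive_currified; [apply: IHj => m Hm; apply: H; lia | apply: H; lia].
field; split => //.
Qed.

Lemma pow_le1' d n : 0 <= d <= 1 -> d ^ n <= 1.
Proof.
move=> hd; elim: n => [|n IH] /=; first lra.
have := pow_le d n ltac:(lra). nra.
Qed.

Lemma pow_le_dec d a b : 0 <= d <= 1 -> (a <= b)%N -> d ^ b <= d ^ a.
Proof.
move=> hd hab. have -> : b = (a + (b - a))%N by lia.
rewrite pow_add. have : 0 <= d ^ (b - a) <= 1.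
  split; [apply: pow_le; lra | apply: pow_le1'; lra].
have : 0 <= d ^ a by apply: pow_le; lra.
nra.
Qed.

Lemma prodr_small d K n : 0 <= d <= 1 ->
  d ^ K <= prodr (fun m => if (m < K)%N then d else 1) n.
Proof.
move=> hd.
have : forall n, d ^ (minn n K) <= prodr (fun m => if (m < K)%N then d else 1) n.
  elim=> [|j IH] /=; first by rewrite min0n /=; lra.
  case: (ltnP j K) => h.
    have -> : minn j.+1 K = (minn j K).+1 by lia.
    simpl. have : 0 <= d by lra. nra.
  have -> : minn j.+1 K = minn j K by lia. lra.
move=> /(_ n) H. apply: Rle_trans H. apply: pow_le_dec => //. exact: geq_minr.
Qed.

Lemma exp_lower t : 0 <= t <= / 2 -> exp (- (t + 2 * t ^ 2)) <= 1 - t.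
Proof.
move=> ht.
have h1 : 1 + t / (1 - t) <= exp (t / (1 - t)) by exact: exp_ineq1_le.
have h2 : exp (- (t / (1 - t))) <= 1 - t.
  rewrite exp_Ropp.
  have e : 1 + t / (1 - t) = / (1 - t) by field; lra.
  rewrite e in h1.
  have p : 0 < / (1 - t) by apply: Rinv_0_lt_compat; lra.
  have := Rinv_le_contravar _ _ p h1. by rewrite Rinv_inv.
have h3 : - (t + 2 * t ^ 2) <= - (t / (1 - t)).
  have : t / (1 - t) <= t + 2 * t ^ 2.
    apply: (Rmult_le_reg_r (1 - t)); first lra.
    rewrite /Rdiv Rmult_assoc Rinv_l; last lra. nra.
  lra.
apply: Rle_trans h2. case: (Rle_lt_or_eq_dec _ _ h3) => h.
  apply: Rlt_le; exact: exp_increasing.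
rewrite h; lra.
Qed.

Definition S2 n := sumr (fun m => if (2 <= m)%N then / INR m ^ 2 else 0) n.+1.

Lemma S2_le n : (1 <= n)%N -> S2 n <= 1 - / INR n.
Proof.
elim: n => [|n IH] // H.
case: (posnP n) => n0.
  subst n. rewrite /S2 /=. simpl. lra.
have IH' := IH n0.
have hn : 0 < INR n by apply: lt_0_INR; apply/ltP.
have e : S2 n.+1 = S2 n + / INR n.+1 ^ 2.
  rewrite /S2. have sS : forall f n, sumr f n.+1 = sumr f n + f n by [].
  rewrite (sS _ n.+1). congr (_ + _). have -> : (2 <= n.+1)%N by lia. done.
rewrite e S_INR. rewrite S_INR in e.
have : / (INR n + 1) ^ 2 <= / INR n - / (INR n + 1).
  have -> : / INR n - / (INR n + 1) = / (INR n * (INR n + 1)) by field; lra.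
  apply: Rinv_le_contravar; nra.
lra.
Qed.

Definition delta k := / INR ((2 * k) ^ k`!)%N.

Lemma delta_bounds k : (1 <= k)%N -> 0 < delta k <= 1.
Proof.
move=> hk. rewrite /delta.
have h : 1 <= INR ((2 * k) ^ k`!)%N.
  have -> : 1 = INR 1 by []. apply: le_INR; apply/leP. by rewrite expn_gt0; apply/orP; left; lia.
split; first by apply: Rinv_0_lt_compat; lra.
rewrite -Rinv_1; apply: Rinv_le_contravar => //; lra.
Qed.

Lemma qm_small_le k m : (1 <= k)%N -> prime m -> (m < 2 * k)%N -> (qm k m <= (2 * k) ^ k`!)%N.
Proof.
move=> hk pm hm. rewrite /qm.
have hE : (0 < Ek k m <= k`!)%N.
  rewrite /Ek; case: (leqP m k) => _ /=; have := fact_gt0 k; lia.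
apply: (@leq_trans ((2 * k) ^ Ek k m)).
  rewrite leq_exp2r; lia.
apply: leq_pexp2l; lia.
Qed.

Definition lowf k m := (if prime m && (m < 2 * k)%N then delta k else 1) *
                       (if prime m && (2 * k <= m)%N then 1 - INR k / INR m else 1).

Lemma lowf_bound k alpha m : (1 <= k)%N -> complete (Pbin k alpha) ->
  0 <= lowf k m <= INR (if prime m then cnt k alpha m else 1%N) / INR (if prime m then qm k m else 1%N).
Proof.
move=> hk C. have [d0 d1] := @delta_bounds k hk.
rewrite /lowf. case pm: (prime m) => /=; last by simpl; split; lra.
have hq : 0 < INR (qm k m) by apply: lt_0_INR; apply/ltP; apply: qm_gt0.
case: (ltnP m (2 * k)) => h /=.
  have c1 : 1 <= INR (cnt k alpha m).
    have -> : 1 = INR 1 by []. apply: le_INR; apply/leP; exact: cnt_pos.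
  have q1 : INR (qm k m) <= INR ((2 * k) ^ k`!)%N by apply: le_INR; apply/leP; exact: qm_small_le.
  rewrite Rmult_1_r. split; first lra.
  rewrite /delta. apply: Rle_trans (_ : / INR (qm k m) <= _).
    apply: Rinv_le_contravar => //.
  rewrite /Rdiv -{1}(Rmult_1_l (/ INR (qm k m))). apply: Rmult_le_compat_r => //.
  apply: Rlt_le; exact: Rinv_0_lt_compat.
have hkm : (k < m)%N by lia.
have hqm : qm k m = m by rewrite /qm /Ek; case: leqP => h'; [lia | by rewrite expn1].
rewrite hqm in hq *. rewrite Rmult_1_l.
have c1 : INR m - INR k <= INR (cnt k alpha m).
  rewrite -minus_INR; last by apply/leP; lia.
  apply: le_INR; apply/leP; rewrite minusE. exact: cnt_large.
have hk2 : 2 * INR k <= INR m.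
  have -> : 2 * INR k = INR (2 * k)%N by rewrite INR_muln. apply: le_INR; apply/leP; done.
have hk0 : 0 < INR k by apply: lt_0_INR; apply/ltP.
split.
  have : INR k / INR m <= / 2.
    apply: (Rmult_le_reg_r (INR m)) => //. rewrite /Rdiv Rmult_assoc Rinv_l; lra.
  lra.
have -> : 1 - INR k / INR m = (INR m - INR k) / INR m by field; lra.
apply: Rmult_le_compat_r => //. apply: Rlt_le; exact: Rinv_0_lt_compat.
Qed.

Lemma exp_k_ln L k : 0 < L -> exp (INR k * ln L) = L ^ k.
Proof. move=> hL. rewrite -ln_pow // exp_ln //. exact: pow_lt. Qed.

Definition c1 k := delta k ^ (2 * k) * exp (- (INR k * B0 + 2 * INR k ^ 2)).

Lemma c1_pos k : (1 <= k)%N -> 0 < c1 k.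
Proof. move=> hk. have [d0 _] := @delta_bounds k hk. rewrite /c1. apply: Rmult_lt_0_compat; [exact: pow_lt | exact: exp_pos]. Qed.

Lemma dens_bound k alpha w : (1 <= k)%N -> (2 <= w)%N -> complete (Pbin k alpha) ->
  c1 k * / ln (INR w) ^ k <= INR (Call k alpha w.+1) / INR (Qall k w.+1).
Proof.
move=> hk hw C.
have [d0 d1] := @delta_bounds k hk.
rewrite /Call /Qall !INR_prodn prodr_div; last first.
  move=> m _; apply: not_0_INR; case: ifP => pm; [have := @qm_gt0 k m pm; lia | done].
apply: Rle_trans (_ : prodr (lowf k) w.+1 <= _); last first.
  by apply: prodr_le => m _; exact: lowf_bound.
rewrite /lowf prodr_mul.
have A : delta k ^ (2 * k) <= prodr (fun m => if prime m && (m < 2 * k)%N then delta k else 1) w.+1.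
  apply: Rle_trans (prodr_small (delta k) (2 * k) w.+1 ltac:(lra)) _.
  apply: prodr_le => m _. case: (m < 2 * k)%N; case: (prime m) => /=; lra.
pose h m := if prime m && (2 * k <= m)%N then - (INR k / INR m + 2 * (INR k / INR m) ^ 2) else 0.
have hk0 : 0 < INR k by apply: lt_0_INR; apply/ltP.
have B1 : exp (sumr h w.+1) <= prodr (fun m => if prime m && (2 * k <= m)%N then 1 - INR k / INR m else 1) w.+1.
  rewrite -prodr_exp. apply: prodr_le => m _. rewrite /h.
  case: ifP => /= H; last by rewrite exp_0; split; lra.
  move/andP: H => [pm hm].
  have hk2 : 2 * INR k <= INR m.
    have -> : 2 * INR k = INR (2 * k)%N by rewrite INR_muln. apply: le_INR; apply/leP; done.
  have hm0 : 0 < INR m by lra.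
  split; first by apply: Rlt_le; exact: exp_pos.
  apply: exp_lower. split.
    apply: Rmult_le_pos; [lra | apply: Rlt_le; exact: Rinv_0_lt_compat].
  apply: (Rmult_le_reg_r (INR m)) => //. rewrite /Rdiv Rmult_assoc Rinv_l; lra.
have B2 : - (INR k * Tr w + 2 * INR k ^ 2 * S2 w) <= sumr h w.+1.
  rewrite /Tr /S2 -!sumr_scal.
  have -> : - (sumr (fun m => INR k * (if prime m then / INR m else 0)) w.+1 +
     sumr (fun m => 2 * INR k ^ 2 * (if (2 <= m)%N then / INR m ^ 2 else 0)) w.+1) =
     sumr (fun m => (-1) * (INR k * (if prime m then / INR m else 0) +
          2 * INR k ^ 2 * (if (2 <= m)%N then / INR m ^ 2 else 0))) w.+1.
    rewrite (sumr_scal (-1)) sumr_add; lra.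
  apply: sumr_le => m _. rewrite /h.
  have H2 : 0 <= (if (2 <= m)%N then / INR m ^ 2 else 0).
    case h2: (2 <= m)%N; last lra.
    apply: Rlt_le; apply: Rinv_0_lt_compat; apply: pow_lt; apply: lt_0_INR; apply/ltP; lia.
  have H1 : 0 <= (if prime m then / INR m else 0).
    case pm: (prime m); last lra.
    apply: Rlt_le; apply: Rinv_0_lt_compat; apply: lt_0_INR; apply/ltP; exact: prime_gt0.
  have kk : 0 <= INR k ^ 2 by apply: pow_le; lra.
  case pm: (prime m) in H1 *; rewrite ?andTb ?andFb; last by nra.
  case hm: (2 * k <= m)%N; last by nra.
  have m2 : (2 <= m)%N by exact: prime_gt1.
  rewrite m2.
  have hm0 : 0 < INR m by apply: lt_0_INR; apply/ltP; lia.
  apply: Req_le; field; lra.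
have T := @T_le w hw.
have S := @S2_le w ltac:(lia).
have Lw := @lnINR_pos w hw.
have iw : 0 < / INR w.
  apply: Rinv_0_lt_compat; apply: lt_0_INR; apply/ltP; lia.
have B3 : - (INR k * (ln (ln (INR w)) + B0) + 2 * INR k ^ 2) <= - (INR k * Tr w + 2 * INR k ^ 2 * S2 w).
  have : 0 <= INR k ^ 2 by apply: pow_le; lra.
  nra.
have B4 : exp (- (INR k * (ln (ln (INR w)) + B0) + 2 * INR k ^ 2)) = 
          exp (- (INR k * B0 + 2 * INR k ^ 2)) * / ln (INR w) ^ k.
  rewrite -(@exp_k_ln (ln (INR w)) k Lw) -exp_Ropp -exp_plus. congr exp. ring.
have Bexp : exp (- (INR k * (ln (ln (INR w)) + B0) + 2 * INR k ^ 2)) <= exp (sumr h w.+1).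
  have := Rle_trans _ _ _ B3 B2. move=> hh.
  case: (Rle_lt_or_eq_dec _ _ hh) => e; [apply: Rlt_le; exact: exp_increasing | rewrite e; lra].
rewrite B4 in Bexp.
have P1 : 0 <= delta k ^ (2 * k) by apply: pow_le; lra.
have P2 : 0 <= exp (- (INR k * B0 + 2 * INR k ^ 2)) * / ln (INR w) ^ k.
  apply: Rmult_le_pos; [apply: Rlt_le; exact: exp_pos | apply: Rlt_le; apply: Rinv_0_lt_compat; exact: pow_lt].
rewrite /c1 Rmult_assoc.
apply: Rmult_le_compat => //. lra.
Qed.

Lemma prodn_mono f n d : (forall m, (0 < f m)%N) -> (prodn f n <= prodn f (n + d))%N.
Proof.
move=> H; elim: d => [|d IH]; first by rewrite addn0.
rewrite addnS /=. apply: leq_trans IH _. by rewrite leq_pmulr.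
Qed.

Lemma prodn_le_stop f N n : (forall m, (0 < f m)%N) -> (forall m, (N <= m)%N -> f m = 1%N) ->
  (prodn f n <= prodn f N)%N.
Proof.
move=> H1 H2. case: (leqP n N) => h.
  have -> : N = (n + (N - n))%N by lia. exact: prodn_mono.
elim: n h => [|n IH] h; first lia.
case: (ltngtP n N) => h'; [lia | | by rewrite /= h' H2 // muln1].
rewrite /= H2 ?muln1; [apply: IH; lia | lia].
Qed.

Definition Kq k := prodn (fun m => if prime m && (m <= k)%N then (m ^ (k`!.-1))%N else 1%N) k.+1.

Lemma Kq_gt0 k : (0 < Kq k)%N.
Proof. apply: prodn_gt0 => m; case: ifP => // /andP [pm _]. by rewrite expn_gt0 prime_gt0. Qed.

Lemma Qall_le k w : (Qall k w.+1 <= 4 ^ w * Kq k)%N.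
Proof.
have e : Qall k w.+1 = (primorial w * prodn (fun m => if prime m && (m <= k)%N then (m ^ (k`!.-1))%N else 1%N) w.+1)%N.
  rewrite /primorial /Pc -prodnM /Qall; apply: prodn_ext => m _.
  case pm: (prime m) => //=.
  rewrite /qm /Ek. case: (leqP m k) => h /=.
    by rewrite -expnS prednK // fact_gt0.
  by rewrite expn1 muln1.
rewrite e. apply: leq_mul; first exact: cheb.
apply: prodn_le_stop.
  move=> m; case: ifP => // /andP [pm _]. by rewrite expn_gt0 prime_gt0.
move=> m hm; case: ifP => // /andP [_ h]; lia.
Qed.

Lemma in_mem_nat (s : seq nat) y : In y s -> y \in s.
Proof. elim: s => [|z s IH] //= [->|h]; rewrite in_cons; [by rewrite eqxx | by rewrite IH ?orbT]. Qed.

Lemma uniq_NoDup (s : seq nat) : uniq s -> NoDup s.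
Proof.
elim: s => [|z s IH] /=; first by constructor.
move=> /andP [hz hs]; constructor; last exact: IH.
move=> /in_mem_nat h; by rewrite h in hz.
Qed.

Lemma Gall_spec k alpha n y p : Gall k alpha n y -> (p < n)%N -> prime p -> gp k alpha p y.
Proof.
elim: n => [|n IH] //= /andP [h1 h2] hp pp.
case: (ltngtP p n) => h; [exact: IH | lia | by move: h2; rewrite -h pp].
Qed.

Lemma INR_Ztonat z : (0 <= z)%Z -> INR (Z.to_nat z) = IZR z.
Proof. move=> h. by rewrite INR_IZR_INZ Z2Nat.id. Qed.

Lemma ln4_le : ln 4 <= 18 / 10.
Proof.
have h : 4 <= exp (18 / 10).
  have e : exp (18/10) = exp (6/10) * exp (6/10) * exp (6/10).
    by rewrite -!exp_plus; congr exp; field.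
  have := exp_ineq1_le (6/10). rewrite e. move=> h1.
  have h2 : 0 <= 1 + 6/10 by lra.
  nra.
rewrite -(ln_exp (18/10)). apply: ln_le'; lra.
Qed.

Lemma ln_pos_of x : 0 < ln x -> 0 < x.
Proof.
rewrite /ln. case: (Rlt_dec 0 x) => // _. lra.
Qed.

Lemma size_length (s : seq nat) : size s = length s.
Proof. by elim: s => //= z s ->. Qed.

Theorem lemma3p3 :
  forall k : nat, le 1 k ->
  exists c : R, c > 0 /\
  forall alpha : nat -> Z,
    alpha k <> 0%Z ->
    complete (Pbin k alpha) ->
    exists x0 : R, forall x : R, x >= x0 ->
      forall w : nat, lt 1 w -> INR w < ln x / 2 ->
        exists l : list nat,
          NoDup l /\
          Forall (fun y => x <= INR y /\ INR y < (1 + 1 / INR k) * x /\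
                           no_small_prime_divisor w (Pbin k alpha y)) l /\
          INR (length l) >= c * / (ln (INR w)) ^ k * x.
Proof.
move=> k /leP hk.
have hk0 : 0 < INR k by apply: lt_0_INR; apply/ltP.
have c1p := @c1_pos k hk.
exists (c1 k / (4 * INR k)); split.
  apply: Rlt_gt. apply: Rdiv_lt_0_compat => //; lra.
move=> alpha _ C.
set K := Kq k.
have K0 := Kq_gt0 k.
set M := INR (4 * k * K)%N.
have M4 : 4 <= M.
  rewrite /M. have : (4 <= 4 * k * K)%N.
    have -> : 4%N = (4 * 1 * 1)%N by []. apply: leq_mul; [apply: leq_mul|]; done.
  move/leP/le_INR. have -> : INR 4 = 4 by simpl; lra. done.
have lnM : 0 < ln M.
  rewrite -ln_1. apply: ln_increasing; lra.
exists (exp (10 * ln M) + 4 * INR k).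
move=> x hx w /ltP hw hwx.
have he := exp_pos (10 * ln M).
have hx0 : 0 < x by lra.
have hxk : 4 * INR k <= x by lra.
have Lx : 10 * ln M <= ln x.
  rewrite -(ln_exp (10 * ln M)); apply: ln_le'; lra.
have [ua1 ua2] := archimed x.
have [ub1 ub2] := archimed (x / INR k).
have xk4 : 4 <= x / INR k.
  apply: (Rmult_le_reg_r (INR k)) => //. rewrite /Rdiv Rmult_assoc Rinv_l; lra.
have upa : (0 < up x)%Z by apply: lt_IZR; lra.
have upb : (4 < up (x / INR k))%Z by apply: lt_IZR; lra.
set a := Z.to_nat (up x).
set L := (Z.to_nat (up (x / INR k)) - 2)%N.
have ha : INR a = IZR (up x) by apply: INR_Ztonat; lia.
have hL : INR L + 2 = IZR (up (x / INR k)).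
  have eL : Z.to_nat (up (x / INR k)) = (L + 2)%N by rewrite /L; lia.
  rewrite -[IZR (up _)]INR_Ztonat; last lia.
  by rewrite eL -plusE plus_INR.
set G := Gall k alpha w.+1.
exists (filter G (iota a L)).
split; [|split].
- apply: uniq_NoDup. apply: filter_uniq. exact: iota_uniq.
- apply/Forall_forall => y /in_mem_nat. rewrite mem_filter mem_iota => /andP [Gy /andP [ay ya]].
  have hy1 : INR a <= INR y by apply: le_INR; apply/leP.
  have hy2 : INR y + 1 <= INR a + INR L.
    rewrite -S_INR -plus_INR. apply: le_INR; apply/leP. rewrite plusE. done.
  split; [lra|split].
  + have e : (1 + 1 / INR k) * x = x + x / INR k by field; lra.
    rewrite e. lra.
  + move=> p pp hp hdiv.
    have [n [en pn]] := @Z_prime_nat p pp. subst p.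
    have hn : (n < w.+1)%N by lia.
    have := @Gall_spec k alpha w.+1 y n Gy hn pn. rewrite /gp => /negP; apply.
    apply/zdvdbP => //. have := prime_gt0 pn; lia.
- rewrite -size_length size_filter.
  have hcnt := count_window k alpha w.+1 a L.
  set Q := Qall k w.+1. set Cc := Call k alpha w.+1.
  have Q0 : 0 < INR Q by apply: lt_0_INR; apply/ltP; exact: Qall_gt0.
  have hd := @dens_bound k alpha w hk hw C.
  have hlw := @lnINR_pos w hw.
  have D0 : 0 < / ln (INR w) ^ k by apply: Rinv_0_lt_compat; apply: pow_lt.
  have hQ : INR Q * (4 * INR k) <= x.
    have h1 : INR Q <= 4 ^ w * INR K.
      have := Qall_le k w. move/leP/le_INR. rewrite INR_muln INR_expn.
      by have -> : INR 4 = 4 by simpl; lra.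
    have h2 : 4 ^ w = exp (INR w * ln 4) by rewrite exp_k_ln; lra.
    have h3 : INR w * ln 4 <= 9 / 10 * ln x.
      have := ln4_le. have : 0 < ln 4 by rewrite -ln_1; apply: ln_increasing; lra.
      have : 0 <= INR w by apply: pos_INR. nra.
    have h4 : exp (INR w * ln 4) <= exp (9 / 10 * ln x).
      case: (Rle_lt_or_eq_dec _ _ h3) => e; [apply: Rlt_le; exact: exp_increasing | rewrite e; lra].
    have h5 : M * exp (9 / 10 * ln x) <= x.
      rewrite -{1}(exp_ln M); last lra. rewrite -exp_plus -{2}(exp_ln x) //.
      have : ln M + 9 / 10 * ln x <= ln x by lra.
      move=> h; case: (Rle_lt_or_eq_dec _ _ h) => e; [apply: Rlt_le; exact: exp_increasing | rewrite e; lra].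
    have eM : M = 4 * INR k * INR K by rewrite /M !INR_muln; have -> : INR 4 = 4 by simpl; lra.
    have hK : 0 <= INR K by apply: pos_INR.
    have h6 : 4 ^ w <= exp (9 / 10 * ln x) by rewrite h2.
    have : INR Q <= exp (9 / 10 * ln x) * INR K by nra.
    rewrite eM in h5. nra.
  have hLQ : x / (4 * INR k) <= INR L - INR Q.
    have : INR Q <= x / (4 * INR k).
      apply: (Rmult_le_reg_r (4 * INR k)); first lra.
      rewrite /Rdiv Rmult_assoc Rinv_l; lra.
    have : x / (4 * INR k) + x / (4 * INR k) <= INR L.
      have -> : x / (4 * INR k) + x / (4 * INR k) = x / INR k / 2 by field; lra.
      lra.
    lra.
  have hdiv := @INR_div_ge L Q ltac:(exact: Qall_gt0).
  have step1 : INR (L %/ Q * Cc)%N <= INR (count G (iota a L)) by apply: le_INR; apply/leP.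
  rewrite INR_muln in step1.
  have hC : 0 <= INR Cc by apply: pos_INR.
  have step2 : (INR L / INR Q - 1) * INR Cc <= INR (L %/ Q) * INR Cc by nra.
  have e2 : (INR L / INR Q - 1) * INR Cc = (INR L - INR Q) * (INR Cc / INR Q) by field; lra.
  rewrite e2 in step2.
  have step3 : x / (4 * INR k) * (c1 k * / ln (INR w) ^ k) <= (INR L - INR Q) * (INR Cc / INR Q).
    apply: Rmult_le_compat => //.
      apply: Rlt_le; apply: Rdiv_lt_0_compat; lra.
    apply: Rlt_le; exact: Rmult_lt_0_compat.
  have e3 : c1 k / (4 * INR k) * / ln (INR w) ^ k * x = x / (4 * INR k) * (c1 k * / ln (INR w) ^ k).
    by rewrite /Rdiv; ring.
  apply: Rle_ge. rewrite e3. lra.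
Qed.
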